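(* Let $p$ be a prime, $m\ge1$ an integer ($m\ge2$ if $p=2$), $\gamma$ a primitive element of $\mathbb F_{p^m}$, $n\ge2$ a divisor of $p^m-1$, and $s=(p^m-1)/n$. Let $\mathcal A_1=\{\gamma^{nt}:t\in\mathbb Z\}$ and $\mathcal A_k=\gamma^{k-1}\mathcal A_1$ for $1\le k\le n$. Writing each $\beta\in\mathbb F_{p^m}$ as $\beta=\sum_{i=1}^m b_i\gamma^{i-1}$ with $b_i\in\{0,\dots,p-1\}$, let $q_k(x_1,\dots,x_m)=\sum_{\beta\in\mathcal A_k}\prod_{i=1}^m x_i^{b_i}$ for $1\le k\le n$ and $q_0=1$, and let $\mathbf V_{n+1}$ be the $\mathbb Q$-span of $q_0,\dots,q_n$ in $R=\mathbb Q[x_1,\dots,x_m]/\langle x_1^p-1,\dots,x_m^p-1\rangle$. Then $\mathbf V_{n+1}$ is a $\mathbb Q$-subalgebra of $R$; in particular, for all $1\le i,j\le n$ there are integers $c_{ijk}$ ($0\le k\le n$) with $$q_iq_j \bmod \langle x_1^p-1,\dots,x_m^p-1\rangle = c_{ij0}+\sum_{k=1}^n c_{ijk}q_k.$$ Moreover: (a) if $p$ is odd and $s$ is even, then $c_{ii0}=s$ and $c_{ij0}=0$ for all $j\ne i$; if $p$ is odd and $s$ is odd, then $c_{ii0}=0$ and $c_{ij0}=s$ for a suitable $j\ne i$; (b) if $p=2$ (in which case $s$ is always odd), then $c_{ii0}=s$ and $c_{ij0}=0$ for all $j\ne i$.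
   Context: The $\mathcal A_k$ are the fibers of the multiplicative character of order $n$ on $\mathbb F_{p^m}^*$ sending $\gamma\mapsto e^{2\pi i/n}$; $q_k$ is the multivariate characteristic polynomial of $\mathcal A_k$ and $q_0=1$ is that of $\{0\}$. *)

(* Defs.v *)
From HB Require Import structures.
From mathcomp Require Import all_boot all_order all_algebra all_field.
From mathcomp Require Import mpoly.
From Stdlib Require Import ClassicalEpsilon.
Set Implicit Arguments. Unset Strict Implicit. Unset Printing Implicit Defensive.
Import GRing.Theory.
Local Open Scope ring_scope.

Definition pbool (P : Prop) : bool :=
  if excluded_middle_informative P then true else false.

Section Defs.
Variables (F : finFieldType) (p m : nat) (gamma : F) (n : nat).

Definition A1 : {set F} :=
  [set x : F | pbool (exists t : int, x = gamma ^ ((n%:Z) * t)%R)].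
Definition Ak (k : nat) : {set F} := [set gamma ^+ k.-1 * a | a in A1].

(* coordinates: beta = sum_{i<m} b_i gamma^i with b_i in {0,...,p-1}
   (the b_i are unique when gamma is primitive; default 0 otherwise) *)
Definition coord (beta : F) (i : 'I_m) : nat :=
  match [pick b : {ffun 'I_m -> 'I_p} |
           beta == \sum_(j < m) (b j : nat)%:R * gamma ^+ j] with
  | Some b => b i
  | None => 0%N
  end.

Definition monom (beta : F) : {mpoly rat[m]} :=
  \prod_(i < m) 'X_i ^+ coord beta i.

Definition q (k : nat) : {mpoly rat[m]} :=
  if k == 0%N then 1 else \sum_(beta in Ak k) monom beta.

Definition eqmodI (f g : {mpoly rat[m]}) : Prop :=
  exists h : 'I_m -> {mpoly rat[m]},
    f - g = \sum_(i < m) h i * ('X_i ^+ p - 1).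

Definition inV (f : {mpoly rat[m]}) : Prop :=
  exists a : nat -> rat, eqmodI f (\sum_(k < n.+1) a k *: q k).
End Defs.

(* Main.v *)
Require Import Defs.
From HB Require Import structures.
From mathcomp Require Import all_boot all_order all_algebra all_field.
From mathcomp Require Import mpoly.
From mathcomp Require Import zify ring.
From Stdlib Require Import ClassicalEpsilon.
Import GRing.Theory.
Local Open Scope ring_scope.

Section Cong.
Variables (p m : nat).
Local Notation eqm := (@eqmodI p m).
Local Notation Y i := ('X_i ^+ p - 1 : {mpoly rat[m]}).

Lemma eqm_refl f : eqm f f.
Proof. by exists (fun=> 0); rewrite subrr big1 // => i _; rewrite mul0r. Qed.

Lemma eqm_sym f g : eqm f g -> eqm g f.
Proof.
case=> h E; exists (fun i => - h i).
by rewrite -opprB E -sumrN; apply: eq_bigr => i _; rewrite mulNr.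
Qed.

Lemma eqm_trans f g k : eqm f g -> eqm g k -> eqm f k.
Proof.
case=> h1 E1 [h2 E2]; exists (fun i => h1 i + h2 i).
have -> : f - k = (f - g) + (g - k) by rewrite addrA subrK.
by rewrite E1 E2 -big_split; apply: eq_bigr => i _; rewrite mulrDl.
Qed.

Lemma eqm_add f1 f2 g1 g2 : eqm f1 g1 -> eqm f2 g2 -> eqm (f1 + f2) (g1 + g2).
Proof.
case=> h1 E1 [h2 E2]; exists (fun i => h1 i + h2 i).
have -> : f1 + f2 - (g1 + g2) = (f1 - g1) + (f2 - g2) by rewrite opprD addrACA.
by rewrite E1 E2 -big_split; apply: eq_bigr => i _; rewrite mulrDl.
Qed.

Lemma eqm_mul f1 f2 g1 g2 : eqm f1 g1 -> eqm f2 g2 -> eqm (f1 * f2) (g1 * g2).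
Proof.
case=> h1 E1 [h2 E2]; exists (fun i => f1 * h2 i + h1 i * g2).
have -> : f1 * f2 - g1 * g2 = f1 * (f2 - g2) + (f1 - g1) * g2.
  by rewrite mulrBr mulrBl addrA subrK.
rewrite E1 E2 mulr_sumr mulr_suml -big_split; apply: eq_bigr => i _.
by rewrite /= mulrDl; congr (_ + _); [exact: mulrA | exact: mulrAC].
Qed.

Lemma eqm_scale (c : rat) f g : eqm f g -> eqm (c *: f) (c *: g).
Proof.
case=> h E; exists (fun i => c *: h i).
by rewrite -scalerBr E scaler_sumr; apply: eq_bigr => i _; rewrite scalerAl.
Qed.

Lemma eqm_sum (I : finType) (P : pred I) (f g : I -> {mpoly rat[m]}) :
  (forall i, P i -> eqm (f i) (g i)) ->
  eqm (\sum_(i | P i) f i) (\sum_(i | P i) g i).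
Proof.
move=> H; apply: (big_ind2 (fun a b => eqm a b)) => //.
- exact: eqm_refl.
- by move=> ? ? ? ?; apply: eqm_add.
Qed.

Lemma eqm_prod (I : finType) (P : pred I) (f g : I -> {mpoly rat[m]}) :
  (forall i, P i -> eqm (f i) (g i)) ->
  eqm (\prod_(i | P i) f i) (\prod_(i | P i) g i).
Proof.
move=> H; apply: (big_ind2 (fun a b => eqm a b)) => //.
- exact: eqm_refl.
- by move=> ? ? ? ?; apply: eqm_mul.
Qed.

Lemma eqm_X (i : 'I_m) k : eqm ('X_i ^+ k) ('X_i ^+ (k %% p)).
Proof.
exists (fun j => if j == i then 'X_i ^+ (k %% p) * \sum_(t < k %/ p) ('X_i ^+ p) ^+ t
                 else 0).
rewrite (bigD1 i) //= eqxx [X in _ = _ + X]big1 ?addr0; last first.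
  by move=> j /negbTE ->; rewrite mul0r.
have -> : 'X_i ^+ k = 'X_i ^+ (k %% p) * ('X_i ^+ p) ^+ (k %/ p) :> {mpoly rat[m]}.
  by rewrite -exprM -exprD mulnC addnC -divn_eq.
have E := subrX1 ('X_i ^+ p) (k %/ p).
rewrite -{2}(mulr1 ('X_i ^+ (k %% p))) -mulrBr E.
by rewrite [(_ - 1) * _]mulrC mulrA.
Qed.

End Cong.

Lemma L_even n s d : ~~ odd s -> (((n * s)./2 + d) %% n = d %% n)%N.
Proof.
move=> es; have -> : ((n * s)./2 = s./2 * n)%N.
  have E : s = (s./2 * 2)%N by lia.
  by rewrite {1}E mulnA [(n * _)%N]mulnC muln2 doubleK.
by rewrite modnMDl.
Qed.

Lemma L_odd n s d : odd s -> ~~ odd (n * s) ->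
  (((n * s)./2 + d) %% n = (n./2 + d) %% n)%N.
Proof.
move=> os; rewrite oddM os andbT => en.
have -> : ((n * s)./2 = s./2 * n + n./2)%N.
  have [r Er] : exists r, n = (r * 2)%N by exists n./2; lia.
  have [t Et] : exists t, s = (t * 2 + 1)%N by exists s./2; lia.
  subst n s. nia.
by rewrite -addnA modnMDl.
Qed.

Lemma L_mod n r c : (0 < r < n)%N -> (c < n)%N -> ((r + c) %% n != c)%N.
Proof.
move=> /andP [r0 rn] cn; case: (ltnP (r + c) n) => h.
  by rewrite modn_small //; lia.
have -> : (r + c = n + (r + c - n))%N by lia.
by rewrite modnDl modn_small; lia.
Qed.

Section S.
Variables (F : finFieldType) (p m : nat) (gamma : F) (n : nat).
Hypotheses (hp : prime p) (hm : (1 <= m)%N) (hm2 : p = 2%N -> (2 <= m)%N)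
  (hF : #|F| = (p ^ m)%N)
  (hgamma : (p ^ m).-1.-primitive_root gamma)
  (hn : (2 <= n)%N) (hnd : (n %| (p ^ m).-1)%N).

Local Notation N := (p ^ m).-1.

Lemma chF : p \in [pchar F].
Proof. exact: card_finPcharP hF hp. Qed.

Lemma p_gt1 : (1 < p)%N. Proof. exact: prime_gt1. Qed.

Lemma pk_lt k : (k < m)%N -> (p ^ k < N)%N.
Proof.
move=> km.
have h1 : (p ^ k <= p ^ m.-1)%N by rewrite leq_exp2l ?p_gt1 //; lia.
have hx : (0 < p ^ m.-1)%N by rewrite expn_gt0 prime_gt0.
have hpm : (p ^ m = p * p ^ m.-1)%N by rewrite -expnS prednK.
have h2 : p = 2%N -> (2 <= p ^ m.-1)%N.
  move=> p2; move: (hm2 p2) => hm2'; rewrite p2.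
  have -> : (2 = 2 ^ 1)%N by [].
  by rewrite leq_exp2l //; lia.
have := p_gt1; rewrite hpm; nia.
Qed.

Definition phi (b : {ffun 'I_m -> 'I_p}) : F :=
  \sum_(j < m) ((b j : nat)%:R * gamma ^+ j).

Lemma frobS (d : 'I_m -> F) (hd : forall j, d j ^+ p = d j) x :
  (\sum_(j < m) d j * x ^+ j) ^+ p = \sum_(j < m) d j * (x ^+ p) ^+ j.
Proof.
transitivity (pFrobenius_aut chF (\sum_(j < m) d j * x ^+ j)); first by [].
rewrite rmorph_sum; apply: eq_bigr => j _.
rewrite rmorphM rmorphXn; exact: (congr2 (fun a b => a * b ^+ j) (hd j) (erefl (x ^+ p))).
Qed.

Lemma natr_ordP (u v : 'I_p) : u != v -> (u : nat)%:R != (v : nat)%:R :> F.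
Proof.
wlog lt : u v / (u < v)%N.
  move=> W neq; case: (ltngtP u v) => h.
  - exact: W.
  - rewrite eq_sym; apply: W => //; rewrite eq_sym //.
  - by move: neq; rewrite (val_inj h) eqxx.
move=> _; apply/negP => /eqP h.
have : ((v - u)%N%:R == 0 :> F).
  rewrite (natrB _ (ltnW lt)) h subrr; exact: eqxx.
rewrite -(dvdn_pcharf chF) => /dvdn_leq; rewrite subn_gt0 => /(_ lt) H.
by have := leq_trans H (leq_subr u v); rewrite leqNgt ltn_ord.
Qed.

Lemma phi_inj : injective phi.
Proof.
move=> b b' E; apply/ffunP => j0; apply/eqP; apply: contraT => neq.
pose d j := ((b j : nat)%:R - (b' j : nat)%:R : F).
have hd j : d j ^+ p = d j.
  transitivity (pFrobenius_aut chF (d j)); first by [].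
  by rewrite rmorphB !rmorph_nat.
pose P : {poly F} := \sum_(j < m) d j *: 'X^j.
have hP x : P.[x] = \sum_(j < m) d j * x ^+ j.
  by rewrite horner_sum; apply: eq_bigr => j _; rewrite hornerZ hornerXn.
have Pg : P.[gamma] = 0.
  rewrite hP; transitivity (phi b - phi b'); last by rewrite E subrr.
  by rewrite /phi -sumrB; apply: eq_bigr => j _; rewrite /d mulrBl.
have Pk k : P.[gamma ^+ (p ^ k)] = 0.
  elim: k => [|k IH]; first by rewrite expn0 expr1.
  by rewrite hP expnSr exprM -frobS // -hP IH expr0n /= (gtn_eqF (prime_gt0 hp)).
have Pn0 : P != 0.
  apply/eqP => /(congr1 (fun P : {poly F} => P`_j0)).
  rewrite coef0 coef_sum (bigD1 j0) //= coefZ coefXn eqxx mulr1 big1 ?addr0.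
    by rewrite /d; apply/eqP; rewrite subr_eq0; apply: natr_ordP.
  move=> j hj; rewrite coefZ coefXn; case: eqP => [E1|_]; last by rewrite mulr0.
  by move: hj; rewrite (val_inj E1) eqxx.
have hsz : (size P <= m)%N.
  apply: leq_trans (size_sum _ _ _) _; apply/bigmax_leqP => j _.
  apply: leq_trans (size_scale_leq _ _) _; rewrite size_polyXn; exact: ltn_ord.
pose rs := [seq gamma ^+ (p ^ k) | k <- iota 0 m].
have := max_poly_roots Pn0 (rs := rs).
rewrite size_map size_iota => /(_ _ _)/leq_trans/(_ hsz); rewrite ltnn.
apply => //.
  by apply/allP => x /mapP [k _ ->]; rewrite /root Pk.
rewrite map_inj_in_uniq ?iota_uniq // => k l; rewrite !mem_iota /= !add0n => hk hl.
move/eqP; rewrite (eq_prim_root_expr hgamma) !modn_small ?pk_lt //.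
by rewrite eqn_exp2l ?p_gt1 // => /eqP.
Qed.


Lemma phi_surj beta : exists b, phi b = beta.
Proof.
have : beta \in codom phi.
  apply: (inj_card_onto phi_inj); by rewrite card_ffun !card_ord hF.

by case/codomP => b ->; exists b.
Qed.

Local Notation cd := (@Defs.coord F p m gamma).

Lemma coordE b beta i : phi b = beta -> cd beta i = b i.
Proof.
move=> E; rewrite /Defs.coord; case: pickP => [b' /eqP E'|H].
  have -> // : b' = b by apply: phi_inj; rewrite E; exact: (esym E').
by have := H b; rewrite -E eqxx.
Qed.

Lemma coord_lt beta i : (cd beta i < p)%N.
Proof. by have [b <-] := phi_surj beta; rewrite (@coordE b (phi b) i erefl). Qed.

Lemma coord_add a b i : cd (a + b) i = ((cd a i + cd b i) %% p)%N.
Proof.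
have [ba Ea] := phi_surj a; have [bb Eb] := phi_surj b.
pose bc : {ffun 'I_m -> 'I_p} :=
  [ffun j => Ordinal (ltn_pmod (ba j + bb j) (prime_gt0 hp))].
have -> : cd (a + b) i = bc i.
  apply: coordE; rewrite -Ea -Eb /phi -big_split; apply: eq_bigr => j _ /=.
  by rewrite ffunE /= (GRing.natr_mod_pchar chF) natrD mulrDl.
by rewrite ffunE /= (coordE _ _ _ Ea) (coordE _ _ _ Eb).
Qed.

Lemma coord0 i : cd 0 i = 0%N.
Proof.
pose b0 : {ffun 'I_m -> 'I_p} := [ffun j => Ordinal (prime_gt0 hp)].
rewrite (@coordE b0 0 i) ?ffunE //.
by rewrite /phi big1 // => j _; rewrite ffunE mul0r.
Qed.


Local Notation mon := (monom p m gamma).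

Lemma monomD a b : eqmodI p (mon a * mon b) (mon (a + b)).
Proof.
rewrite /monom -big_split /=.
apply: eqm_prod => i _; rewrite -exprD coord_add; exact: eqm_X.
Qed.

Lemma monom0 : mon 0 = 1.
Proof. by rewrite /monom big1 // => i _; rewrite coord0 expr0. Qed.


Lemma pboolE (P : Prop) : pbool P = true <-> P.
Proof. by rewrite /pbool; case: excluded_middle_informative. Qed.

Lemma N_gt0 : (0 < N)%N. Proof. exact: prim_order_gt0 hgamma. Qed.

Lemma gN1 : gamma ^+ N = 1. Proof. exact: prim_expr_order. Qed.

Lemma gamma_neq0 : gamma != 0.
Proof.
apply/eqP => g0; have := gN1; rewrite g0 expr0n.
by rewrite (gtn_eqF N_gt0) => /eqP; rewrite eq_sym oner_eq0.
Qed.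

Lemma gexp_neq0 e : gamma ^+ e != 0.
Proof. exact: expf_neq0 gamma_neq0. Qed.

Definition dlog (x : F) : nat :=
  if [pick e : 'I_N | x == gamma ^+ e] is Some e then (e : nat) else 0%N.

Lemma cardF : #|F| = N.+1.
Proof. by rewrite hF prednK // expn_gt0 prime_gt0. Qed.

Lemma dlogK x : x != 0 -> gamma ^+ dlog x = x.
Proof.
move=> x0; have xN : x ^+ N = 1.
  apply: (mulfI x0); rewrite mulr1 -exprS -cardF; exact: expf_card.
have [i Ei] := prim_rootP hgamma xN.
rewrite /dlog; case: pickP => [e /eqP -> //|H].
by have := H i; rewrite Ei eqxx.
Qed.

Lemma dlog_lt x : (dlog x < N)%N.
Proof. rewrite /dlog; case: pickP => [e _|_]; [exact: ltn_ord | exact: N_gt0]. Qed.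

Lemma expmod e e' : gamma ^+ e = gamma ^+ e' -> (e %% n = e' %% n)%N.
Proof.
move/eqP; rewrite (eq_prim_root_expr hgamma) => /eqP E.
by rewrite -(modn_dvdm e hnd) E modn_dvdm.
Qed.

Lemma dlog_mod x e : x = gamma ^+ e -> (dlog x %% n = e %% n)%N.
Proof. move=> E; apply: expmod; rewrite dlogK // E; exact: gexp_neq0. Qed.

Lemma memA1 x : x \in A1 gamma n <-> exists e : nat, x = gamma ^+ (n * e).
Proof.
rewrite inE; split.
  move/pboolE; case=> t ->; case: t => k.
    by exists k; rewrite -PoszM.
  exists (k.+1 * N.-1)%N.
  rewrite NegzE mulrN -invr_expz -PoszM.
  have H : gamma ^+ (n * k.+1) * gamma ^+ (n * (k.+1 * N.-1)) = 1.
    rewrite -exprD -mulnDr -mulnS prednK ?N_gt0 //.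
    by rewrite mulnA mulnC exprM gN1 expr1n.
  apply: (mulrI (x := gamma ^+ (n * k.+1))).
    by rewrite unitfE gexp_neq0.
  by rewrite H /= divrr // unitfE gexp_neq0.
case=> e ->; apply/pboolE; exists e; by rewrite -PoszM.
Qed.

Lemma memAk k x : (1 <= k <= n)%N ->
  (x \in Ak gamma n k) = (x != 0) && (dlog x %% n == k.-1)%N.
Proof.
case/andP=> k1 kn; have kn' : (k.-1 < n)%N by rewrite prednK.
apply/imsetP/andP.
  case=> a /memA1 [e ->] ->; rewrite -exprD; split; first exact: gexp_neq0.
  by rewrite (@dlog_mod _ _ erefl) addnC mulnC modnMDl modn_small.
case=> x0 /eqP hd; exists (gamma ^+ (n * (dlog x %/ n))%N).
  by apply/memA1; exists (dlog x %/ n)%N.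
by rewrite -exprD -hd mulnC addnC -divn_eq dlogK.
Qed.


Local Notation s := (N %/ n)%N.

Lemma n_gt0 : (0 < n)%N. Proof. by apply: leq_trans hn. Qed.

Lemma Ns : (n * s = N)%N. Proof. by rewrite mulnC divnK. Qed.

Lemma cardA1 : #|A1 gamma n| = s.
Proof.
pose f (t : 'I_s) := gamma ^+ (n * t).
have -> : A1 gamma n = f @: setT.
  apply/setP => x; apply/idP/idP => [/memA1 [e ->]|/imsetP [t _ ->]]; last first.
    by apply/memA1; exists t.
    apply/imsetP.
    have ls : (e %% s < s)%N by rewrite ltn_mod divn_gt0 ?n_gt0 // dvdn_leq // N_gt0.
    exists (Ordinal ls) => //; rewrite /f /=.
    rewrite {1}(divn_eq e s) mulnDr exprD mulnA mulnAC Ns exprM gN1 expr1n mul1r //.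
rewrite card_imset ?cardsT ?card_ord // => t t' /eqP; rewrite /f (eq_prim_root_expr hgamma).
have lt u : (u < s)%N -> (n * u < N)%N by move=> us; rewrite -Ns ltn_pmul2l ?n_gt0.
rewrite !modn_small ?lt // eqn_pmul2l ?n_gt0 // => /eqP; exact: val_inj.
Qed.

Lemma cardAk k : #|Ak gamma n k| = s.
Proof. by rewrite card_imset ?cardA1 //; apply: mulfI; apply: gexp_neq0. Qed.

Definition cls (x : F) : 'I_n.+1 :=
  inord (if x == 0 then 0 else (dlog x %% n).+1).

Lemma cls_val x : (cls x : nat) = if x == 0 then 0%N else (dlog x %% n).+1.
Proof.
by rewrite inordK //; case: (x == 0) => //; rewrite ltnS ltn_mod n_gt0.
Qed.

Lemma sum_partition (V : nmodType) (f : F -> V) :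
  \sum_x f x = f 0 + \sum_(1 <= k < n.+1) \sum_(x in Ak gamma n k) f x.
Proof.
rewrite (partition_big cls predT) //= big_ord_recl.
congr (_ + _).
  apply: big_pred1 => x /=; rewrite -(inj_eq val_inj) /= cls_val.
  by case: (x == 0).
rewrite big_add1 /= big_mkord; apply: eq_bigr => k _.
apply: eq_bigl => x; rewrite memAk; last by rewrite /= ltn_ord.
rewrite -(inj_eq val_inj) /= cls_val /bump /= add1n.
by case: (x == 0).
Qed.


Local Notation A k := (Ak gamma n k).

Lemma memAk_mul k u y : (1 <= k <= n)%N -> u \in A1 gamma n ->
  (u * y \in A k) = (y \in A k).
Proof.
move=> kb /memA1 [e ->]; rewrite !memAk //.
have [->|y0] := eqVneq y 0; first by rewrite mulr0 eqxx.
rewrite mulf_neq0 ?gexp_neq0 //=.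
rewrite (@dlog_mod _ (n * e + dlog y)%N); last by rewrite exprD dlogK.
by rewrite mulnC modnMDl.
Qed.

Definition Nf i j (x : F) : nat := #|[set a in A i | x - a \in A j]|.

Lemma Nf_inv i j u x : (1 <= i <= n)%N -> (1 <= j <= n)%N ->
  u \in A1 gamma n -> Nf i j (u * x) = Nf i j x.
Proof.
move=> ib jb uA; rewrite /Nf.
have uA' := uA; case/memA1: uA' => e ue.
have u0 : u != 0 by rewrite ue gexp_neq0.
rewrite -(card_preimset _ (mulfI u0)); apply: eq_card => a.
by rewrite !inE -mulrBr !memAk_mul.
Qed.

Lemma Nf_cls i j k x : (1 <= i <= n)%N -> (1 <= j <= n)%N ->
  x \in A k -> Nf i j x = Nf i j (gamma ^+ k.-1).
Proof.
move=> ib jb /imsetP [a aA ->]; by rewrite mulrC Nf_inv.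
Qed.

Local Notation qq := (q p m gamma n).

Lemma eqm_eq (f g : {mpoly rat[m]}) : f = g -> eqmodI p f g.
Proof. move=> ->; exact: eqm_refl. Qed.

Lemma qprod i j : (1 <= i <= n)%N -> (1 <= j <= n)%N ->
  eqmodI p (qq i * qq j)
    (((Nf i j 0)%:Z)%:~R + \sum_(1 <= k < n.+1)
        (((Nf i j (gamma ^+ k.-1))%:Z)%:~R : rat) *: qq k).
Proof.
move=> ib jb.
have qE k : (1 <= k)%N -> qq k = \sum_(x in A k) mon x.
  by rewrite /q; case: k.
rewrite (qE i (andP ib).1) (qE j (andP jb).1) mulr_suml.
apply: (@eqm_trans p m _ (\sum_(a in A i) \sum_(b in A j) mon (a + b))).
  apply: eqm_sum => a _; rewrite mulr_sumr; apply: eqm_sum => b _.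
  exact: monomD.
apply: eqm_eq.
transitivity (\sum_x mon x *+ Nf i j x).
  transitivity (\sum_(a in A i) \sum_x (if x - a \in A j then mon x else 0)).
    apply: eq_bigr => a _; rewrite -big_mkcond /=.
    rewrite (reindex (fun x => x - a)) /=; last first.
      by exists (fun b => b + a) => b _; rewrite ?addrK ?subrK.
    by apply: eq_bigr => x _; rewrite addrC subrK.
  rewrite exchange_big /=; apply: eq_bigr => x _.
  rewrite -big_mkcondr /= -sumr_const; apply: eq_bigl => a.
  by rewrite inE.
rewrite sum_partition; congr (_ + _).
  by rewrite monom0.
apply: eq_big_nat => k /andP [k1 kn].
have kb : (1 <= k <= n)%N by rewrite k1 -ltnS.
rewrite qE // scaler_sumr; apply: eq_bigr => x xA.
by rewrite (@Nf_cls i j k x ib jb xA) scaler_nat.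
Qed.


Lemma odd_N : odd p -> ~~ odd N.
Proof.
move=> op; have E : (p ^ m = N.+1)%N by rewrite prednK // expn_gt0 prime_gt0.
by move: (oddX p m); rewrite E /= op orbT => ->.
Qed.

Lemma gH : odd p -> gamma ^+ N./2 = -1.
Proof.
move=> op; have eN := odd_N op.
have : (gamma ^+ N./2) ^+ 2 == 1.
  rewrite -exprM muln2; have -> : (N./2.*2 = N)%N by move: eN; lia.
  by rewrite gN1.
rewrite sqrf_eq1 => /orP [/eqP E1|/eqP //]; exfalso; move: E1.
rewrite -(expr0 gamma) => /eqP; rewrite (eq_prim_root_expr hgamma) mod0n.
have := N_gt0; rewrite modn_small; last by have := N_gt0; lia.
move=> h /eqP; move: eN h; lia.
Qed.

Lemma dlogN y : odd p -> y != 0 -> (dlog (- y) %% n = (N./2 + dlog y) %% n)%N.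
Proof.
move=> op y0; apply: dlog_mod.
by rewrite exprD gH // dlogK // mulN1r.
Qed.

Lemma disjA i j a : (1 <= i <= n)%N -> (1 <= j <= n)%N -> i != j ->
  a \in A i -> a \notin A j.
Proof.
move=> ib jb ij; rewrite !memAk // => /andP [_ /eqP ->]; apply/negP => /andP [_ /eqP].
move: ij ib jb; lia.
Qed.

Lemma memAkN_even k y : (1 <= k <= n)%N -> (p = 2%N \/ (odd p /\ ~~ odd s)) ->
  (- y \in A k) = (y \in A k).
Proof.
move=> kb [p2|[op es]].
  by rewrite oppr_pchar2 //; rewrite -p2; exact: chF.
rewrite !memAk // oppr_eq0; have [->|y0] := eqVneq y 0 => //=.
by rewrite dlogN // -Ns L_even.
Qed.

Lemma memAkN_odd k y : (1 <= k <= n)%N -> odd p -> odd s ->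
  (- y \in A k) = (y != 0) && ((n./2 + dlog y) %% n == k.-1)%N.
Proof.
move=> kb op os; rewrite !memAk // oppr_eq0; have [->|y0] := eqVneq y 0 => //=.
rewrite dlogN // -Ns L_odd //; rewrite Ns; exact: odd_N.
Qed.


Lemma Nf0_even i j : (1 <= i <= n)%N -> (1 <= j <= n)%N ->
  (p = 2%N \/ (odd p /\ ~~ odd s)) ->
  Nf i j 0 = if i == j then s else 0%N.
Proof.
move=> ib jb E; rewrite /Nf; case: eqP => [<-|/eqP ij].
  rewrite -(cardAk i); apply: eq_card => a; rewrite inE sub0r memAkN_even //.
  exact: andbb.
apply: eq_card0 => a; rewrite inE sub0r memAkN_even //.
apply/negP => /andP [h1 h2]; by have := @disjA i j a ib jb ij h1; rewrite h2.
Qed.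

Lemma half_b : (0 < n./2 < n)%N.
Proof. have := hn; lia. Qed.

Lemma Nf0_odd_ii i : (1 <= i <= n)%N -> odd p -> odd s -> Nf i i 0 = 0%N.
Proof.
move=> ib op os; rewrite /Nf; apply: eq_card0 => a.
rewrite inE sub0r memAkN_odd //; apply/negP => /andP [].
rewrite memAk // => /andP [_ /eqP hd] /andP [_].
rewrite -modnDmr hd; apply/negP; apply: L_mod; first exact: half_b.
move: ib; lia.
Qed.

Lemma Nf0_odd_ij i : (1 <= i <= n)%N -> odd p -> odd s ->
  let j := ((n./2 + i.-1) %% n).+1 in
  [/\ (1 <= j <= n)%N, j != i & Nf i j 0 = s].
Proof.
move=> ib op os j.
have jb : (1 <= j <= n)%N by rewrite /j ltn_mod n_gt0.
split => //.
  rewrite /j; apply/negP => /eqP E.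
  have H := congr1 predn E; rewrite /= in H.
  have cn : (i.-1 < n)%N by move: ib; lia.
  by have := @L_mod n n./2 i.-1 half_b cn; rewrite H eqxx.
rewrite /Nf -(cardAk i); apply: eq_card => a; rewrite inE sub0r memAkN_odd //.
case aA: (a \in A i) => //=; move: aA; rewrite memAk // => /andP [-> /eqP hd] /=.
by apply/eqP; rewrite -modnDmr hd.
Qed.


Local Notation V := (@inV F p m gamma n).

Lemma inV_eqm f g : eqmodI p f g -> V g -> V f.
Proof. by move=> E [a Ea]; exists a; apply: eqm_trans E Ea. Qed.

Lemma inV0 : V 0.
Proof.
exists (fun=> 0); apply: eqm_eq; rewrite big1 // => k _; exact: scale0r.
Qed.

Lemma inV_add f g : V f -> V g -> V (f + g).
Proof.
case=> a Ea [b Eb]; exists (fun k => a k + b k).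
have -> : \sum_(k < n.+1) (a k + b k) *: qq k =
  \sum_(k < n.+1) a k *: qq k + \sum_(k < n.+1) b k *: qq k.
  by rewrite -big_split; apply: eq_bigr => k _; rewrite scalerDl.
exact: eqm_add.
Qed.

Lemma inV_scale c f : V f -> V (c *: f).
Proof.
case=> a Ea; exists (fun k => c * a k).
have -> : \sum_(k < n.+1) (c * a k) *: qq k = c *: \sum_(k < n.+1) a k *: qq k.
  by rewrite scaler_sumr; apply: eq_bigr => k _; rewrite scalerA.
exact: eqm_scale.
Qed.

Lemma inV_sum (I : Type) (r : seq I) (P : pred I) (G : I -> {mpoly rat[m]}) :
  (forall i, P i -> V (G i)) -> V (\sum_(i <- r | P i) G i).
Proof.
move=> H; apply: (big_ind V) => //; [exact: inV0 | exact: inV_add].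
Qed.

Lemma inV_q k : (k < n.+1)%N -> V (qq k).
Proof.
move=> kn; exists (fun l => (l == k)%:R); apply: eqm_eq.
rewrite (bigD1 (Ordinal kn)) //= eqxx scale1r big1 ?addr0 //.
by move=> l /negbTE; rewrite -(inj_eq val_inj) /= => ->; rewrite scale0r.
Qed.

Lemma q0 : qq 0 = 1. Proof. by []. Qed.

Lemma inV_qq k l : (k < n.+1)%N -> (l < n.+1)%N -> V (qq k * qq l).
Proof.
move=> kn ln.
case: k kn => [|k] kn; first by rewrite q0 mul1r; exact: inV_q.
case: l ln => [|l] ln; first by rewrite q0 mulr1; exact: inV_q.
apply: inV_eqm (@qprod k.+1 l.+1 _ _) _; rewrite ?ltnS //.
apply: inV_add.
  have -> : ((Nf k.+1 l.+1 0)%:Z%:~R : {mpoly rat[m]}) =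
      (((Nf k.+1 l.+1 0)%:Z%:~R : rat) *: qq 0) by rewrite q0 scaler_int.
  by apply: inV_scale; apply: inV_q.
rewrite big_seq; apply: inV_sum => r; rewrite mem_index_iota => /andP [_ rn].
by apply: inV_scale; apply: inV_q.
Qed.

Lemma inV_mul f g : V f -> V g -> V (f * g).
Proof.
case=> a Ea [b Eb]; apply: inV_eqm (@eqm_mul p m _ _ _ _ Ea Eb) _.
rewrite mulr_suml; apply: inV_sum => k _; rewrite mulr_sumr.
apply: inV_sum => l _; rewrite -scalerAl -scalerAr.
by apply: inV_scale; apply: inV_scale; apply: inV_qq.
Qed.

Lemma inV1 : V 1.
Proof. by rewrite -q0; apply: inV_q. Qed.


Lemma main :
  let s := ((p ^ m).-1 %/ n)%N in
  (inV p gamma n (1 : {mpoly rat[m]}) /\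
   forall f g : {mpoly rat[m]}, inV p gamma n f -> inV p gamma n g ->
     inV p gamma n (f * g)) /\
  exists c : nat -> nat -> nat -> int,
    (forall i j, (1 <= i <= n)%N -> (1 <= j <= n)%N ->
       eqmodI p (q p m gamma n i * q p m gamma n j)
         ((c i j 0%N)%:~R + \sum_(1 <= k < n.+1) ((c i j k)%:~R : rat) *: q p m gamma n k)) /\
    (odd p -> ~~ odd s -> forall i, (1 <= i <= n)%N ->
       c i i 0%N = s%:Z /\
       forall j, (1 <= j <= n)%N -> j != i -> c i j 0%N = 0) /\
    (odd p -> odd s -> forall i, (1 <= i <= n)%N ->
       c i i 0%N = 0 /\
       exists j, [/\ (1 <= j <= n)%N, j != i & c i j 0%N = s%:Z]) /\
    (p = 2%N -> odd s /\ forall i, (1 <= i <= n)%N ->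
       c i i 0%N = s%:Z /\
       forall j, (1 <= j <= n)%N -> j != i -> c i j 0%N = 0).
Proof.
move=> s0; split; first by split; [exact: inV1 | move=> f g; exact: inV_mul].
exists (fun i j k => (Nf i j (if k == 0%N then 0 else gamma ^+ k.-1))%:Z).
have evenc : (p = 2%N \/ (odd p /\ ~~ odd s)) -> forall i, (1 <= i <= n)%N ->
   (Nf i i 0)%:Z = s%:Z /\
   forall j, (1 <= j <= n)%N -> j != i -> (Nf i j 0)%:Z = 0.
  move=> E i ib; rewrite Nf0_even // eqxx; split => // j jb ji.
  by rewrite Nf0_even // eq_sym (negbTE ji).
split.
  move=> i j ib jb /=; apply: eqm_trans (@qprod i j ib jb) _; apply: eqm_eq.
  congr (_ + _); apply: eq_big_nat => k /andP [k1 _].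
  by case: k k1.
split; first by move=> op es i ib /=; apply: evenc => //; right.
split.
  move=> op os i ib /=; rewrite Nf0_odd_ii //; split => //.
  have [jb ji hN] := @Nf0_odd_ij i ib op os.
  by exists ((n./2 + i.-1) %% n).+1; split => //; rewrite hN.
move=> p2.
have os : odd s.
  have : odd N.
    have E : (p ^ m = N.+1)%N by rewrite prednK // expn_gt0 prime_gt0.
    have h := oddX p m; rewrite E /= in h.
    have m0 : (m == 0)%N = false by case: (m) hm.
    by apply: negbFE; rewrite h m0 p2.
  by rewrite -{1}Ns oddM => /andP [].
split => //; move=> i ib /=; apply: evenc => //; by left.
Qed.

End S.

Theorem theorem1 (F : finFieldType) (p m : nat) (gamma : F) (n : nat)
  (hp : prime p) (hm : (1 <= m)%N) (hm2 : p = 2%N -> (2 <= m)%N)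
  (hF : #|F| = (p ^ m)%N)
  (hgamma : (p ^ m).-1.-primitive_root gamma)
  (hn : (2 <= n)%N) (hnd : (n %| (p ^ m).-1)%N) :
  let s := ((p ^ m).-1 %/ n)%N in
  (* V_{n+1} is a Q-subalgebra of R (closed under multiplication in R) *)
  (inV p gamma n (1 : {mpoly rat[m]}) /\
   forall f g : {mpoly rat[m]}, inV p gamma n f -> inV p gamma n g ->
     inV p gamma n (f * g)) /\
  exists c : nat -> nat -> nat -> int,
    (forall i j, (1 <= i <= n)%N -> (1 <= j <= n)%N ->
       eqmodI p (q p m gamma n i * q p m gamma n j)
         ((c i j 0%N)%:~R + \sum_(1 <= k < n.+1) ((c i j k)%:~R : rat) *: q p m gamma n k)) /\
    (odd p -> ~~ odd s -> forall i, (1 <= i <= n)%N ->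
       c i i 0%N = s%:Z /\
       forall j, (1 <= j <= n)%N -> j != i -> c i j 0%N = 0) /\
    (odd p -> odd s -> forall i, (1 <= i <= n)%N ->
       c i i 0%N = 0 /\
       exists j, [/\ (1 <= j <= n)%N, j != i & c i j 0%N = s%:Z]) /\
    (p = 2%N -> odd s /\ forall i, (1 <= i <= n)%N ->
       c i i 0%N = s%:Z /\
       forall j, (1 <= j <= n)%N -> j != i -> c i j 0%N = 0).
Proof. exact: main. Qed.
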